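(* Let $M\subset E^n$ be an $r$-helix hypersurface and let $H\subset\mathbb{R}^n$ be its subspace of helix directions. Let $\alpha: I\subset\mathbb{R}\to M$ be a unit speed (arc-length parametrized) geodesic curve on $M$. Then the tangent indicatrix $\alpha'(s)$ of $\alpha$, regarded as a curve on the unit hypersphere $S^{n-1}\subset E^n$, is a spherical helix (general helix) with respect to any helix direction $d\in H$.
   Context: $E^n$ denotes $\mathbb{R}^n$ with the standard inner product $\langle X,Y\rangle=\sum x_iy_i$. A hypersurface $M\subset\mathbb{R}^n$ with unit normal field $\xi$ is a helix with respect to a fixed unit direction $d$ if the angle between $d$ and $T_qM$ is the same for all $q\in M$, equivalently $\langle d,\xi\rangle$ is constant on $M$. $M$ is an $r$-helix if there is a linear subspace $H\subset\mathbb{R}^n$ with $\dim H=r$ such that $M$ is a helix with respect to every direction $d\in H$; $H$ is the subspace of helix directions. A curve $\alpha$ on $M$ is a geodesic if $\alpha''$ is normal to $M$ at every point. Curves are assumed regular with nonvanishing curvatures, so that they have a Frenet frame $\{V_1,\dots,V_n\}$ with $V_1'=k_1V_2$, $V_i'=-k_{i-1}V_{i-1}+k_iV_{i+1}$. A curve is a general helix with respect to a fixed direction $d$ if its unit tangent vector makes a constant angle with $d$; a spherical helix is a general helix lying on $S^{n-1}$. *)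

(* Defs.v *)
(* Euclidean space E^{n+1} = 'rV[R]_n.+1. *)
From HB Require Import structures.
From mathcomp Require Import all_boot all_order all_algebra.
From mathcomp Require Import all_classical all_reals all_analysis.
Set Implicit Arguments. Unset Strict Implicit. Unset Printing Implicit Defensive.
Import Order.TTheory GRing.Theory Num.Theory.
Import numFieldNormedType.Exports.
Local Open Scope classical_set_scope.
Local Open Scope ring_scope.

Definition edot (R : realType) (n : nat) (u v : 'rV[R]_n) : R :=
  \sum_(i < n) u ord0 i * v ord0 i.

Definition enorm (R : realType) (n : nat) (u : 'rV[R]_n) : R :=
  Num.sqrt (edot u u).

Definition tangent_space (R : realType) (n : nat) (M : set 'rV[R]_n)
  (q : 'rV[R]_n) : set 'rV[R]_n :=
  [set v | exists gam : R -> 'rV[R]_n,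
     [/\ gam 0 = q, derivable gam 0 1, (\forall t \near 0, M (gam t))
       & 'D_1 gam 0 = v]].

Definition normal_to (R : realType) (n : nat) (M : set 'rV[R]_n)
  (q v : 'rV[R]_n) : Prop :=
  forall w, tangent_space M q w -> edot v w = 0.

Definition hypersurface (R : realType) (n : nat) (M : set 'rV[R]_n.+1) : Prop :=
  forall q, M q ->
  exists (U : set 'rV[R]_n) (phi : 'rV[R]_n -> 'rV[R]_n.+1)
         (V : set 'rV[R]_n.+1),
  [/\ open U /\ open V /\ V q,
      (forall u, U u -> differentiable phi u /\
                        (forall v, 'd phi u v = 0 -> v = 0)),
      (forall u1 u2, U u1 -> U u2 -> phi u1 = phi u2 -> u1 = u2),
      phi @` U = M `&` V &
      (* continuity of the inverse chart *)
      (forall u, U u -> forall e : R, 0 < e -> exists2 d : R, 0 < d &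
         forall u', U u' -> `|phi u' - phi u| < d -> `|u' - u| < e)].

Definition unit_normal_field (R : realType) (n : nat) (M : set 'rV[R]_n)
  (xi : 'rV[R]_n -> 'rV[R]_n) : Prop :=
  {within M, continuous xi} /\
  (forall q, M q -> edot (xi q) (xi q) = 1 /\ normal_to M q (xi q)).

Definition helix_wrt (R : realType) (n : nat) (M : set 'rV[R]_n)
  (xi : 'rV[R]_n -> 'rV[R]_n) (d : 'rV[R]_n) : Prop :=
  exists c : R, forall q, M q -> edot d (xi q) = c.

(* H (the row space of the matrix H) is an r-dimensional subspace all of whose
   unit directions are helix directions of M *)
Definition r_helix_subspace (R : realType) (n : nat) (M : set 'rV[R]_n)
  (xi : 'rV[R]_n -> 'rV[R]_n) (H : 'M[R]_n) (r : nat) : Prop :=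
  \rank H = r /\
  (forall d : 'rV[R]_n, (d <= H)%MS -> edot d d = 1 -> helix_wrt M xi d).

Definition unit_speed_geodesic (R : realType) (n : nat) (M : set 'rV[R]_n)
  (alpha : R -> 'rV[R]_n) (I : set R) : Prop :=
  (forall s, I s ->
     [/\ M (alpha s), derivable alpha s 1 /\
         derivable (fun t => 'D_1 alpha t) s 1,
         edot ('D_1 alpha s) ('D_1 alpha s) = 1,
         normal_to M (alpha s) ('D_1 (fun t => 'D_1 alpha t) s) &
         'D_1 (fun t => 'D_1 alpha t) s != 0]) /\
  {within I, continuous (fun s => 'D_1 (fun t => 'D_1 alpha t) s)}.

Definition general_helix (R : realType) (n : nat) (beta : R -> 'rV[R]_n)
  (I : set R) (d : 'rV[R]_n) : Prop :=
  (forall s, I s -> derivable beta s 1 /\ 'D_1 beta s != 0) /\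
  exists c : R, forall s, I s ->
    edot ((enorm ('D_1 beta s))^-1 *: 'D_1 beta s) d = c.

Definition spherical_helix (R : realType) (n : nat) (beta : R -> 'rV[R]_n)
  (I : set R) (d : 'rV[R]_n) : Prop :=
  (forall s, I s -> edot (beta s) (beta s) = 1) /\ general_helix beta I d.

(* Main.v *)
Require Import Defs.
From HB Require Import structures.
From mathcomp Require Import all_boot all_order all_algebra.
From mathcomp Require Import all_classical all_reals all_analysis.
From mathcomp Require Import lra.
Import Order.TTheory GRing.Theory Num.Theory.
Import numFieldNormedType.Exports.
Local Open Scope classical_set_scope.
Local Open Scope ring_scope.
Set Implicit Arguments.

Section E.
Variables (R : realType) (m : nat).
Implicit Types u v w : 'rV[R]_m.

Lemma edotC u v : edot u v = edot v u.
Proof. by apply: eq_bigr => i _; rewrite mulrC. Qed.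
Lemma edotDl u v w : edot (u + v) w = edot u w + edot v w.
Proof. by rewrite /edot -big_split; apply: eq_bigr => i _; rewrite mxE mulrDl. Qed.
Lemma edotZl (k : R) u v : edot (k *: u) v = k * edot u v.
Proof. by rewrite /edot mulr_sumr; apply: eq_bigr => i _; rewrite mxE mulrA. Qed.
Lemma edotNl u v : edot (- u) v = - edot u v.
Proof. by rewrite -scaleN1r edotZl mulN1r. Qed.
Lemma edotBl u v w : edot (u - v) w = edot u w - edot v w.
Proof. by rewrite edotDl edotNl. Qed.
Lemma edot_eq0 u : edot u u = 0 -> u = 0.
Proof.
move=> /eqP; rewrite /edot psumr_eq0 => [/allP H|i _]; last by rewrite -expr2 sqr_ge0.
apply/rowP => i; rewrite mxE.
by have := H i (mem_index_enum _); rewrite mulf_eq0 orbb => /eqP.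
Qed.

Lemma edot_cvg (T : Type) (F : set_system T) (FF : Filter F)
  (f : T -> 'rV[R]_m) (l : 'rV[R]_m) v :
  f x @[x --> F] --> l -> edot (f x) v @[x --> F] --> edot l v.
Proof.
move=> fl; rewrite /edot.
elim: (index_enum _) => [|i r IH].
  have -> : (fun x => \sum_(i <- [::]) f x ord0 i * v ord0 i) = fun _ => 0.
    by apply: funext => x; rewrite big_nil.
  rewrite big_nil; exact: cvg_cst.
have -> : (fun x => \sum_(i0 <- i :: r) f x ord0 i0 * v ord0 i0) =
  fun x => f x ord0 i * v ord0 i + \sum_(i0 <- r) f x ord0 i0 * v ord0 i0.
  by apply: funext => x; rewrite big_cons.
rewrite big_cons; apply: cvgD => //.
apply: cvgMr_tmp.
exact: (cvg_comp _ _ fl (@coord_continuous R _ _ ord0 i l)).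
Qed.
End E.

Lemma normal_1dim (R : realType) (n : nat)
  (L : {linear 'rV[R]_n -> 'rV[R]_n.+1}) (x v : 'rV[R]_n.+1) :
  (forall y, L y = 0 -> y = 0) -> edot x x = 1 ->
  (forall y, edot x (L y) = 0) -> (forall y, edot v (L y) = 0) ->
  v = edot v x *: x.
Proof.
move=> Linj xx xL vL.
pose A : 'M[R]_(n + 1, n.+1) := col_mx (lin1_mx L) x.
have mulA : forall u : 'rV_(n + 1),
    u *m A = L (lsubmx u) + rsubmx u 0 0 *: x.
  move=> u; rewrite -{1}(hsubmxK u) mul_row_col mul_rV_lin1.
  by rewrite {1}[rsubmx u]mx11_scalar mul_scalar_mx.
have Lx : forall y, edot (L y) x = 0 by move=> y; rewrite edotC.
have inj : forall u : 'rV_(n + 1), u *m A = 0 -> u = 0.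
  move=> u; rewrite mulA => h.
  have c0 : rsubmx u 0 0 = 0.
    have := congr1 (fun z => edot z x) h.
    rewrite edotDl edotZl Lx xx add0r mulr1 => ->.
    by rewrite /edot big1 // => i _; rewrite mxE mul0r.
  move: h; rewrite c0 scale0r addr0 => /Linj hl.
  rewrite -(hsubmxK u) hl.
  have -> : rsubmx u = 0 by apply/rowP => i; rewrite ord1 [RHS]mxE; exact: c0.
  by apply/rowP => i; rewrite !mxE; case: splitP => j _; rewrite mxE.
have rf : row_free A.
  rewrite -kermx_eq0 -submx0; apply/row_subP => i.
  have /sub_kermxP/inj -> := row_sub i (kermx A).
  exact: sub0mx.
  have rF : row_full A by rewrite /row_full; move: rf; rewrite /row_free => /eqP ->; rewrite addn1.
set w := v - edot v x *: x.
have [y wy] := submxP (submx_full w rF).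
have wL : forall z, edot (L z) w = 0.
  move=> z; rewrite edotC /w edotBl edotZl vL xL; by rewrite mulr0 subr0.
have wx : edot x w = 0.
  by rewrite edotC /w edotBl edotZl xx mulr1 subrr.
have ww : edot w w = 0.
  by rewrite {1}wy mulA edotDl edotZl wL wx mulr0 addr0.
by apply/eqP; rewrite -subr_eq0 -/w; apply/eqP; exact: edot_eq0.
Qed.

Lemma chart_tangent (R : realType) (n : nat) (M : set 'rV[R]_n.+1)
  (U : set 'rV[R]_n) (phi : 'rV[R]_n -> 'rV[R]_n.+1) (u0 y : 'rV[R]_n) :
  open U -> U u0 -> differentiable phi u0 -> (forall u, U u -> M (phi u)) ->
  tangent_space M (phi u0) ('d phi u0 y).
Proof.
move=> oU Uu0 dphi UM.
pose gam := fun t : R => phi (t *: y + u0).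
have E : (fun h : R => h^-1 *: ((gam \o shift 0) (h *: 1) - gam 0)) =
         (fun h : R => h^-1 *: ((phi \o shift u0) (h *: y) - phi u0)).
  apply: funext => h /=; rewrite /gam /shift /= scale0r add0r addr0.
  by rewrite [h *: 1]mulr1.
exists gam; split.
- by rewrite /gam scale0r add0r.
- rewrite /derivable E; exact: (diff_derivable dphi).
- have cv : (fun t : R => t *: y + u0) @ 0 --> u0.
    suff : (fun t : R => t *: y + u0) @ 0 --> 0 *: y + u0 by rewrite scale0r add0r.
    apply: cvgD; last exact: cvg_cst.
    apply: cvgZr_tmp; exact: cvg_id.
  have : nbhs u0 U by apply: (@open_nbhs_nbhs _ u0 U); split.
  move=> /cv H; near=> t; apply: UM; near: t; exact: H.
- by rewrite /derive E -deriveE.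
Unshelve. all: by end_near. Qed.

Lemma normal_span (R : realType) (n : nat) (M : set 'rV[R]_n.+1)
  (xi : 'rV[R]_n.+1 -> 'rV[R]_n.+1) (q v : 'rV[R]_n.+1) :
  hypersurface M -> unit_normal_field M xi -> M q -> normal_to M q v ->
  v = edot v (xi q) *: xi q.
Proof.
move=> hM [_ unf] Mq nv.
have [U [phi [V [[oU [oV Vq]] hd hinj himg _]]]] := hM q Mq.
have : (phi @` U) q by rewrite himg.
case=> u0 Uu0 eq; subst q.
have UM : forall u, U u -> M (phi u).
  move=> u Uu; have : (phi @` U) (phi u) by exists u.
  by rewrite himg => -[].
have [dphi dinj] := hd u0 Uu0.
have [xx xn] := unf (phi u0) Mq.
apply: (normal_1dim ('d phi u0)) => //.
- move=> y; apply: xn; exact: (@chart_tangent R n M U phi u0 y oU Uu0 dphi UM).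
- move=> y; apply: nv; exact: (@chart_tangent R n M U phi u0 y oU Uu0 dphi UM).
Qed.

Lemma minmax_prod (R : realDomainType) (u v : R) :
  u * v < 0 -> Num.min u v <= 0 <= Num.max u v.
Proof.
move=> uv; rewrite ge_min le_max.
have [u0|u0] := ltP u 0.
  move: uv; rewrite (nmulr_rlt0 _ u0) => v0.
  by rewrite (ltW u0) (ltW v0) orbT.
have u0' : 0 < u.
  rewrite lt0r u0 andbT; apply/eqP => u00.
  by move: uv; rewrite u00 mul0r ltxx.
move: uv; rewrite (pmulr_rlt0 _ u0') => v0.
by apply/andP; split; apply/orP; [right; exact: ltW | left].
Qed.

Lemma sgn_eq (R : realFieldType) (u w : R) : u != 0 -> w != 0 ->
  ~ (0 < u /\ w < 0) -> ~ (0 < w /\ u < 0) -> `|u|^-1 * u = `|w|^-1 * w.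
Proof.
move=> u0 w0 h1 h2.
have [uneg|upos] := ltP u 0.
  have wneg : w < 0.
    rewrite ltNge; apply/negP => wp; apply: h2; split => //.
    by rewrite lt0r w0.
  by rewrite !ltr0_norm // !invrN !mulNr !mulVf.
have wpos : 0 < w.
  rewrite ltNge; apply/negP => wn; apply: h1; split; first by rewrite lt0r u0.
  by rewrite lt_neqAle w0.
have upos2 : 0 < u by rewrite lt0r u0.
by rewrite (gtr0_norm wpos) (gtr0_norm upos2) !mulVf.
Qed.

Unset Implicit Arguments.
Theorem theorem3p1 (R : realType) (n r : nat) (M : set 'rV[R]_n.+1)
  (xi : 'rV[R]_n.+1 -> 'rV[R]_n.+1) (H : 'M[R]_n.+1)
  (a b : R) (alpha : R -> 'rV[R]_n.+1) :
  hypersurface M ->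
  unit_normal_field M xi ->
  r_helix_subspace M xi H r ->
  a < b ->
  unit_speed_geodesic M alpha `]a, b[ ->
  forall d : 'rV[R]_n.+1, (d <= H)%MS -> edot d d = 1 ->
    spherical_helix (fun s => 'D_1 alpha s) `]a, b[ d.
Proof.
move=> hM unf [_ hH] ab [geo A2c] d dH dd.
have [c hc] := hH d dH dd.
set A2 := fun s => 'D_1 (fun t => 'D_1 alpha t) s.
pose lam s := edot (A2 s) (xi (alpha s)).
have decomp : forall s, [set` `]a, b[] s -> A2 s = lam s *: xi (alpha s).
  move=> s Is; have [Ma _ _ nA _] := geo s Is.
  exact: (normal_span hM unf Ma nA).
have lam0 : forall s, [set` `]a, b[] s -> lam s != 0.
  move=> s Is; apply/eqP => l0; have [_ _ _ _ /eqP] := geo s Is; apply.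
  by rewrite /A2 -/(A2 s) decomp // l0 scale0r.
have gdef : forall s, [set` `]a, b[] s -> edot (A2 s) d = lam s * c.
  move=> s Is; rewrite decomp // edotZl edotC hc //.
  by have [] := geo s Is.
pose g s := edot (A2 s) d.
have gdef' : forall s, [set` `]a, b[] s -> g s = lam s * c by exact: gdef.
have Ndef : forall s, [set` `]a, b[] s ->
    edot ((enorm (A2 s))^-1 *: A2 s) d = `|lam s|^-1 * lam s * c.
  move=> s Is; have [Ma _ _ _ _] := geo s Is.
  have [xx _] := unf.2 _ Ma.
  have -> : enorm (A2 s) = `|lam s|.
    by rewrite /enorm decomp // edotZl edotC edotZl xx mulr1 -expr2 sqrtr_sqr.
  by rewrite edotZl gdef // mulrA.
split.
  by move=> s Is; have [_ _ ? _ _] := geo s Is.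
split.
  by move=> s Is; have [_ [_ ?] _ _ ?] := geo s Is.
have Is0 : [set` `]a, b[] ((a + b) / 2).
  rewrite /= in_itv /=; apply/andP; split; lra.
exists (`|lam ((a + b) / 2)|^-1 * lam ((a + b) / 2) * c).
move=> s Is.
rewrite (Ndef s Is).
have [->|c0] := eqVneq c 0; first by rewrite !mulr0.
have A2ci : {in `]a, b[, continuous A2}.
  move=> z zI; move: A2c; rewrite continuous_open_subspace; last exact: itv_open.
  by apply; rewrite inE.
have IVTh : forall x y, [set` `]a, b[] x -> [set` `]a, b[] y -> x <= y ->
    lam x * lam y < 0 -> False.
  move=> x y Ix Iy xy lxy.
  have Ixy : forall z, z \in `[x, y] -> [set` `]a, b[] z.
    move=> z; move: Ix Iy; rewrite /= !in_itv /= => /andP[ax _] /andP[_ yb].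
    move=> /andP[xz zy]; apply/andP; split; lra.
  have gc : {within `[x, y], continuous g}.
    apply: continuous_in_subspaceT => z zin.
    apply: edot_cvg; apply: A2ci.
    by apply: Ixy; move: zin; rewrite inE.
  have gxy : g x * g y < 0.
    rewrite (gdef' x Ix) (gdef' y Iy) mulrACA -expr2.
    have c2 : 0 < c ^+ 2 by rewrite lt0r sqr_ge0 andbT sqrf_eq0.
    by rewrite pmulr_llt0.
  have [z zin gz] : exists2 z, z \in `[x, y] & g z = 0.
    apply: IVT => //.
    exact: minmax_prod.
  have Iz : [set` `]a, b[] z by apply: Ixy; move: zin; rewrite inE.
  move: gz; rewrite (gdef' z Iz).
  by move/eqP; rewrite mulf_eq0 (negbTE c0) orbF (negbTE (lam0 _ Iz)).
have sgn : forall x y, [set` `]a, b[] x -> [set` `]a, b[] y -> 0 < lam x -> lam y < 0 -> False.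
  move=> x y Ix Iy lx ly.
  have [xy|yx] := leP x y.
    by apply: (IVTh x y) => //; nra.
  by apply: (IVTh y x) => //; [exact: ltW | nra].
congr (_ * _).
apply: sgn_eq; [exact: lam0 | exact: lam0 | |].
- by case=> h1 h2; exact: (sgn _ _ Is Is0 h1 h2).
- by case=> h1 h2; exact: (sgn _ _ Is0 Is h1 h2).
Qed.
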